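(* Let $m\ge 9$ be an integer and $g=\lceil\log_2 m\rceil$. For each integer $k$ with $m/g\le k\le m$, let $b_k$ be the number of integer sequences $0=x_0<x_1<\dots<x_k\le x_{k+1}=m$ such that $\max_{1\le i\le k+1}(x_i-x_{i-1})\le g$. Then for every real number $z\ge 2$, $$\Big(1-\big(\tfrac{2}{z+1}\big)^{g}\Big)(z+1)^m\le\sum_{k=\lceil m/g\rceil}^{m} b_k z^k\le (z+1)^m.$$ *)

(* Defs.v *)
From HB Require Import structures.
From mathcomp Require Import all_boot all_order all_algebra.
Set Implicit Arguments. Unset Strict Implicit. Unset Printing Implicit Defensive.
Import Order.TTheory GRing.Theory Num.Theory.

(* g = ceil(log_2 m): the smallest e with m <= 2^e *)
Definition gpar (m : nat) : nat := up_log 2 m.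

Definition ceil_div (a b : nat) : nat := (a + b.-1) %/ b.

(* A k-tuple (x_1,...,x_k) with entries in {0..m} is admissible when
   0 = x_0 < x_1 < ... < x_k  (x_k <= m automatic, x_{k+1} = m)
   and every gap x_i - x_{i-1} (1 <= i <= k+1) is at most g. *)
Definition admissible (m g k : nat) (t : k.-tuple 'I_m.+1) : bool :=
  let xs := [seq val i | i <- t] in
  path ltn 0 xs && path (fun a b => b <= a + g) 0 (rcons xs m).

Definition bk (m g k : nat) : nat := #|[pred t : k.-tuple 'I_m.+1 | admissible g t]|.

(* Main.v *)
Require Import Defs.
From HB Require Import structures.
From mathcomp Require Import all_boot all_order all_algebra.
From mathcomp Require Import zify ring lra.
Set Implicit Arguments. Unset Strict Implicit. Unset Printing Implicit Defensive.
Import Order.TTheory GRing.Theory Num.Theory.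


Lemma card_sorted_sets n k (P : pred (seq nat)) :
  #|[set t : k.-tuple 'I_n.+1 | sorted ltn (map val t) && P (map val t)]| =
  #|[set A : {set 'I_n.+1} | (#|A| == k) && P (map val (enum A))]|.
Proof.
pose i0 : 'I_n.+1 := ord0.
pose f_t (t : k.-tuple 'I_n.+1) := [set i in t].
pose f_A (A : {set 'I_n.+1}) := [tuple of mkseq (nth i0 (enum A)) k].
have val_fA (A : {set 'I_n.+1}) : #|A| = k -> val (f_A A) = enum A.
  by move=> Am; rewrite -[enum _](mkseq_nth i0) -cardE Am.
have inc_A (A : {set 'I_n.+1}) : sorted ltn (map val (enum A)).
  rewrite -[enum _](eq_filter (mem_enum _)).
  rewrite -(eq_filter (mem_map val_inj _)) -filter_map.
  by rewrite (sorted_filter ltn_trans) // unlock val_ord_enum iota_ltn_sorted.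
rewrite -!sum1dep_card (reindex_onto f_t f_A) /= => [|A]; last first.
  by move/andP=> [/eqP cardAm _]; apply/setP=> x; rewrite inE -(mem_enum A) -val_fA.
apply: eq_bigl => t.
apply/idP/idP => [/andP[inc_t Pt]|/andP [/andP[/eqP t_m Pt] /eqP <-]]; last first.
  by rewrite val_fA // inc_A.
have ft_m: #|f_t t| = k.
  rewrite cardsE (card_uniqP _) ?size_tuple // -(map_inj_uniq val_inj).
  exact: (sorted_uniq ltn_trans ltnn).
have e : map val (enum (f_t t)) = map val t.
  apply/(irr_sorted_eq ltn_trans ltnn) => // y.
  by apply/mapP/mapP=> [] [x t_x ->]; exists x; rewrite // mem_enum inE in t_x *.
rewrite ft_m eqxx e Pt /= -val_eqE val_fA // -(inj_eq (inj_map val_inj)) /=.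
by rewrite e.
Qed.

Lemma win (g m : nat) x0 xs : path ltn x0 xs -> all (fun x => x <= m) xs ->
  ~~ path (fun a b => b <= a + g) x0 (rcons xs m) ->
  exists j, x0 <= j /\ j + g < m /\ forall x, x \in xs -> ~~ (j < x <= j + g).
Proof.
elim: xs x0 => [|y ys IH] x0 /=.
  by rewrite andbT -ltnNge => _ _ h; exists x0; split => //.
move=> /andP[x0y py] /andP[ym ays]; rewrite negb_and => /orP[h|h].
  exists x0; rewrite -ltnNge in h; split => //; split; first by lia.
  move=> x; rewrite inE => /orP[/eqP ->|xin]; first by lia.
  have := order_path_min ltn_trans py => /allP /(_ x xin); lia.
have [j [yj [jm hj]]] := IH y py ays h.
exists j; split; first by lia. split => // x; rewrite inE => /orP[/eqP ->|]; last exact: hj.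
lia.
Qed.

Lemma gap_total g x0 xs y : path (fun a b => b <= a + g) x0 (rcons xs y) ->
  y <= x0 + (size xs).+1 * g.
Proof.
elim: xs x0 => [|z zs IH] x0 /=; first by rewrite andbT mul1n.
move=> /andP[h1 /IH]; rewrite mulSn; lia.
Qed.

Lemma gaps_bounds g x0 xs y : path ltn x0 xs -> path (fun a b => b <= a + g) x0 (rcons xs y) ->
  all (fun d => 0 < d <= g) (pairmap (fun a b => b - a) x0 xs).
Proof.
elim: xs x0 => [|z zs IH] x0 //= /andP[h1 h2] /andP[h3 h4].
rewrite (IH z h2 h4) andbT; lia.
Qed.

Lemma scan_gaps x0 xs : path leq x0 xs ->
  scanl addn x0 (pairmap (fun a b => b - a) x0 xs) = xs.
Proof.
elim: xs x0 => [|z zs IH] x0 //= /andP[h1 h2].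
by rewrite subnKC // IH.
Qed.

Lemma inc_A n (A : {set 'I_n}) : sorted ltn (map val (enum A)).
Proof.
  rewrite -[enum _](eq_filter (mem_enum _)).
  rewrite -(eq_filter (mem_map val_inj _)) -filter_map.
  by rewrite (sorted_filter ltn_trans) // unlock val_ord_enum iota_ltn_sorted.
Qed.

Definition Pa m g (xs : seq nat) :=
  path ltn 0 xs && path (fun a b => b <= a + g) 0 (rcons xs m).

Lemma bk_sets m g k : bk m g k =
  #|[set A : {set 'I_m.+1} | (#|A| == k) && Pa m g (map val (enum A))]|.
Proof.
rewrite /bk -card_sorted_sets cardsE; apply: eq_card => t.
rewrite !inE /admissible /Pa unfold_in /=.
case h: (path _ 0 _) => //=; last by rewrite andbF.
by rewrite (path_sorted h).
Qed.

Lemma Q_eq m (A : {set 'I_m.+1}) :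
  path ltn 0 (map val (enum A)) = (A \subset [set~ ord0]).
Proof.
rewrite path_sortedE; last exact: ltn_trans.
rewrite inc_A andbT; apply/allP/subsetP => [h x xA|h x /mapP[y yA ->]].
  rewrite !inE -val_eqE /= -lt0n; apply: h; apply: map_f; by rewrite mem_enum.
by rewrite mem_enum in yA; have := h y yA; rewrite !inE -val_eqE /= lt0n.
Qed.

Lemma Q_card m k :
  #|[set A : {set 'I_m.+1} | (#|A| == k) && path ltn 0 (map val (enum A))]| = 'C(m,k).
Proof.
have hc : #|[set~ (ord0 : 'I_m.+1)]| = m by rewrite cardsC1 card_ord.
rewrite -[X in 'C(X, k)]hc -cards_draws; apply: eq_card => A; rewrite !inE Q_eq.
by rewrite andbC.
Qed.

Lemma bk_le_bin m g k : bk m g k <= 'C(m,k).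
Proof.
rewrite bk_sets -Q_card; apply: subset_leq_card; apply/subsetP => A.
by rewrite !inE /Pa => /andP[-> /andP[-> _]].
Qed.


Lemma card_sum (T : finType) (p : pred T) : #|[set x | p x]| = \sum_x (p x : nat).
Proof. by rewrite -sum1dep_card big_mkcond; apply: eq_bigr => x _; case: (p x). Qed.

Lemma sum_mem (T : finType) (S : {set T}) : \sum_x ((x \in S) : nat) = #|S|.
Proof. by rewrite -sum1_card [RHS]big_mkcond; apply: eq_bigr => x _; case: (x \in S). Qed.

Definition Wd m g (j : 'I_(m - g)) := [set x : 'I_m.+1 | (j < x) && (x <= j + g)].
Arguments Wd : clear implicits.

Lemma card_Wd m g (j : 'I_(m - g)) : g <= #|Wd m g j|.
Proof.
pose f := fun i : 'I_g => (inord (j + i + 1) : 'I_m.+1).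
have hb (i : 'I_g) : j + i + 1 < m.+1.
  have := ltn_ord j; have := ltn_ord i; lia.
have finj : injective f.
  move=> a b /(congr1 val); rewrite /f /= !inordK // => h; apply: val_inj => /=; lia.
rewrite -[X in X <= _]card_ord -(card_imset _ finj); apply: subset_leq_card.
apply/subsetP => x /imsetP[i _ ->]; rewrite !inE /f.
rewrite inordK //; have := ltn_ord i; lia.
Qed.

Lemma card_BW m g (j : 'I_(m - g)) : #|[set~ (ord0 : 'I_m.+1)] :\: Wd m g j| <= m - g.
Proof.
rewrite cardsD cardsC1 card_ord /=.
have -> : [set~ ord0] :&: Wd m g j = Wd m g j.
  apply/setIidPr/subsetP => x; rewrite !inE => /andP[h _]; rewrite -val_eqE /=; lia.
by apply: leq_sub2l; apply: card_Wd.
Qed.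

Lemma union m g k : 'C(m,k) <= bk m g k + (m - g) * 'C(m - g, k).
Proof.
rewrite -Q_card bk_sets !card_sum.
pose Y (j : 'I_(m - g)) := [set A : {set 'I_m.+1} | A \subset [set~ ord0] :\: Wd m g j & #|A| == k].
apply: (@leq_trans (\sum_(A : {set 'I_m.+1}) (((#|A| == k) && Pa m g (map val (enum A))) : nat)
     + \sum_(j < m - g) \sum_(A : {set 'I_m.+1}) ((A \in Y j) : nat))).
  rewrite exchange_big -big_split /=; apply: leq_sum => A _.
  case hk: (#|A| == k) => //=. case hq: (path _ 0 _) => //=.
  rewrite /Pa hq /=.
  case hp: (path _ 0 (rcons _ m)) => //=.
  have hall : all (fun x => x <= m) (map val (enum A)).
    by apply/allP => x /mapP[y _ ->]; have := ltn_ord y.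
  have [j [_ [jm hj]]] := win hq hall (negbT hp).
  have jlt : j < m - g by lia.
  rewrite (bigD1 (Ordinal jlt)) //= add0n.
  suff -> : A \in Y (Ordinal jlt) by [].
  rewrite !inE hk andbT; apply/subsetP => x xA.
  rewrite !inE /=; apply/andP; split.
    apply: hj; apply: map_f; by rewrite mem_enum.
  by move: hq; rewrite Q_eq => /subsetP /(_ x xA); rewrite !inE.
rewrite leq_add2l; apply: (@leq_trans (\sum_(j < m - g) 'C(m - g, k))).
  apply: leq_sum => j _.
  rewrite sum_mem cards_draws; apply: leq_bin2l; exact: card_BW.
by rewrite sum_nat_const card_ord.
Qed.


Lemma bk_zero m g k : k.+1 * g < m -> bk m g k = 0.
Proof.
move=> h; rewrite /bk; apply: eq_card0 => t; rewrite unfold_in /admissible /=.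
apply/negP => /andP[_ /gap_total]; rewrite size_map size_tuple add0n; lia.
Qed.

Lemma bk_le_pow m g k : 0 < g -> bk m g k <= g ^ k.
Proof.
case: g => // g' _.
pose ds (t : k.-tuple 'I_m.+1) := pairmap (fun a b => b - a) 0 (map val t).
pose F (t : k.-tuple 'I_m.+1) : {ffun 'I_k -> 'I_g'.+1} :=
  [ffun i : 'I_k => inord (nth 0 (ds t) i).-1].
rewrite /bk -[X in X ^ _](card_ord g'.+1) -[X in _ ^ X](card_ord k) -card_ffun.
apply: (@leq_card_in _ _ F) => t1 t2; rewrite !unfold_in /admissible /=.
move=> /andP[p1 q1] /andP[p2 q2] /ffunP eq.
have b1 := gaps_bounds p1 q1; have b2 := gaps_bounds p2 q2.
have s1 : size (ds t1) = k by rewrite size_pairmap size_map size_tuple.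
have s2 : size (ds t2) = k by rewrite size_pairmap size_map size_tuple.
have eds : ds t1 = ds t2.
  apply: (@eq_from_nth _ 0) => [|i ilt]; first by rewrite s1 s2.
  have ik : i < k by rewrite -s1.
  have := eq (Ordinal ik); rewrite !ffunE => /(congr1 val) /=.
  have /andP[l1 u1] := allP b1 _ (mem_nth 0 ilt).
  have /andP[l2 u2] : 0 < nth 0 (ds t2) i <= g'.+1.
    by apply: (allP b2); apply: mem_nth; rewrite s2.
  rewrite !inordK; [by move=> h; rewrite -(prednK l1) -(prednK l2) h | by rewrite prednK | by rewrite prednK].
have h1 : path leq 0 (map val t1) by apply: sub_path p1 => a b /ltnW.
have h2 : path leq 0 (map val t2) by apply: sub_path p2 => a b /ltnW.
apply: val_inj; apply: (inj_map val_inj).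
by rewrite -(scan_gaps h1) -(scan_gaps h2); rewrite /ds in eds; rewrite eds.
Qed.


Lemma expn_mono a b e : a <= b -> a ^ e <= b ^ e.
Proof. by move=> h; elim: e => // e IH; rewrite !expnS leq_mul. Qed.

Lemma g_small n : n + 4 <= 2 ^ (n + 2).
Proof.
elim: n => // n IH; rewrite !addSn expnS; lia.
Qed.

Lemma g_facts m : 9 <= m ->
  [/\ 4 <= gpar m, m <= 2 ^ gpar m & gpar m < m].
Proof.
move=> hm; rewrite /gpar.
have h1 : m <= 2 ^ up_log 2 m by apply: up_logP.
have h2 : 2 ^ (up_log 2 m).-1 < m by apply: up_log_gtn; lia.
split => //.
  rewrite leqNgt; apply/negP => h.
  have : 2 ^ up_log 2 m <= 2 ^ 3 by rewrite leq_exp2l //; lia.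
  rewrite expnS; lia.
have h3 := ltn_expl (up_log 2 m).-1 (isT : 1 < 2).
case: (up_log 2 m) h2 h3 => [|u] /=; lia.
Qed.

Lemma pow_bound g K m : 4 <= g -> 1 <= K -> K * g < m -> g ^ K <= g * 2 ^ (m - g - K).
Proof.
move=> hg hK hm.
have -> : g ^ K = g * g ^ K.-1 by case: K hK hm => // K _ _; rewrite expnS.
rewrite leq_mul2l; apply/orP; right.
have hg2 : g <= 2 ^ (g - 2).
  have := g_small (g - 4); have -> : g - 4 + 2 = g - 2 by lia.
  lia.
apply: (leq_trans (expn_mono K.-1 hg2)); rewrite -expnM leq_exp2l //.
nia.
Qed.

Lemma ceil_lt m g k : 0 < g -> (k < ceil_div m g) = (k * g < m).
Proof.
move=> hg; rewrite /ceil_div leq_divRL // mulSn.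
apply/idP/idP; lia.
Qed.

Local Open Scope ring_scope.

Theorem mainTheorem13 (R : realFieldType) (m : nat) (z : R) :
  (9 <= m)%N -> 2 <= z ->
  (1 - (2 / (z + 1)) ^+ gpar m) * (z + 1) ^+ m
    <= \sum_(ceil_div m (gpar m) <= k < m.+1) (bk m (gpar m) k)%:R * z ^+ k
  /\ \sum_(ceil_div m (gpar m) <= k < m.+1) (bk m (gpar m) k)%:R * z ^+ k
    <= (z + 1) ^+ m.
Proof.
move=> hm hz.
have [hg4 hm2 hgm] := g_facts hm.
set g := gpar m in hg4 hm2 hgm *.
have g0 : (0 < g)%N by lia.
set c := ceil_div m g.
have hc : (c <= m.+1)%N by rewrite leqNgt /c ceil_lt //; apply/negP; nia.
have hc2 : (1 < c)%N by rewrite /c ceil_lt //; lia.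
have z0 : 0 <= z by apply: le_trans hz.
have z1 : 0 < z + 1 by rewrite ltr_wpDl.
pose bz k := (bk m g k)%:R * z ^+ k.
have bz0 k : 0 <= bz k by rewrite /bz mulr_ge0 ?exprn_ge0.
have binom n : (z + 1) ^+ n = \sum_(0 <= k < n.+1) ('C(n, k))%:R * z ^+ k.
  by rewrite exprD1n big_mkord; apply: eq_bigr => i _; rewrite mulr_natl.
have binom2 : (z + 1) ^+ (m - g) = \sum_(0 <= k < m.+1) ('C(m - g, k))%:R * z ^+ k.
  rewrite binom (@big_cat_nat _ _ _ (m - g).+1 0 m.+1) //=; last by lia.
  rewrite [X in _ + X]big1_seq ?addr0 // => k /andP[_]; rewrite mem_iota => /andP[hk _].
  by rewrite bin_small ?mul0r.
have split_sum : \sum_(0 <= k < m.+1) bz k =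
    \sum_(0 <= k < c) bz k + \sum_(c <= k < m.+1) bz k.
  by rewrite (@big_cat_nat _ _ _ c 0 m.+1).
have Hall : (z + 1) ^+ m <= \sum_(0 <= k < m.+1) bz k + (m - g)%:R * (z + 1) ^+ (m - g).
  rewrite binom binom2 mulr_sumr -big_split /=; apply: ler_sum => k _.
  rewrite /bz mulrA -mulrDl ler_wpM2r ?exprn_ge0 // -natrM -natrD ler_nat.
  exact: union.
have Hup : \sum_(0 <= k < m.+1) bz k <= (z + 1) ^+ m.
  rewrite binom; apply: ler_sum => k _.
  by rewrite /bz ler_wpM2r ?exprn_ge0 // ler_nat bk_le_bin.
have Hsmall : \sum_(0 <= k < c) bz k <= g%:R * (z + 1) ^+ (m - g).
  have c0 : (0 < c)%N by lia.
  have cK : c = c.-1.+1 by rewrite prednK.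
  set K := c.-1 in cK.
  have hKg : (K * g < m)%N by rewrite -ceil_lt // -/c cK.
  have hK1 : (1 <= K)%N by lia.
  rewrite cK big_nat_recr //= big1_seq ?add0r; last first.
    move=> k /andP[_]; rewrite mem_iota => /andP[_ hk].
    rewrite /bz bk_zero ?mul0r //; rewrite -ceil_lt // -/c cK; lia.
  have hp := pow_bound hg4 hK1 hKg.
  rewrite /bz.
  apply: (@le_trans _ _ ((g ^ K)%:R * z ^+ K)).
    by rewrite ler_wpM2r ?exprn_ge0 // ler_nat bk_le_pow.
  apply: (@le_trans _ _ ((g * 2 ^ (m - g - K))%:R * (z + 1) ^+ K)).
    apply: ler_pM; rewrite ?ler0n ?exprn_ge0 ?ler_nat //.
    apply: lerXn2r; rewrite ?nnegrE // ?ltW //; lra.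
  have hKm : (K <= m - g)%N by nia.
  rewrite natrM natrX -mulrA ler_wpM2l // -{2}(subnK hKm) exprD ler_wpM2r //.
    exact: exprn_ge0 (ltW z1).
  by apply: lerXn2r; rewrite ?nnegrE //; lra.
have Hs0 : 0 <= \sum_(0 <= k < c) bz k by apply: sumr_ge0 => k _.
have Hm2 : (m%:R : R) <= 2 ^+ g by rewrite -natrX ler_nat.
have Hlhs : (1 - (2 / (z + 1)) ^+ g) * (z + 1) ^+ m = (z + 1) ^+ m - 2 ^+ g * (z + 1) ^+ (m - g).
  have -> : (z + 1) ^+ m = (z + 1) ^+ g * (z + 1) ^+ (m - g).
    by rewrite -exprD subnKC //; lia.
  have hn : (z + 1) ^+ g != 0 by rewrite expf_neq0 // gt_eqF.
  rewrite expr_div_n mulrBl mul1r mulrA divfK //.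
rewrite -/c; split; last first.
  by apply: le_trans Hup; rewrite split_sum lerDr.
rewrite Hlhs.
have Hp : 0 <= (z + 1) ^+ (m - g) by rewrite exprn_ge0 // ltW.
have Hmg : ((m - g)%:R : R) = m%:R - g%:R by rewrite natrB //; lia.
rewrite Hmg in Hall.
have H2 : m%:R * (z + 1) ^+ (m - g) <= 2 ^+ g * (z + 1) ^+ (m - g) by rewrite ler_wpM2r.
move: Hall Hsmall H2; rewrite split_sum.
set A := (z + 1) ^+ (m - g); set S1 := \sum_(0 <= k < c) bz k; set S2 := \sum_(c <= k < m.+1) bz k.
move=> Hall Hsmall H2.
have e : (m%:R - g%:R) * A = m%:R * A - g%:R * A by rewrite mulrBl.
rewrite e in Hall.
lra.
Qed.
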